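(* Let $\alpha,\beta\ge0$ with $b=\alpha+\beta\le n$, and let $\mathbf{s}=(s_1,\dots,s_k)$ be a switch pattern. Then $$f_{\alpha,\beta,\mathbf{s}}=\frac1{2^b}\sum_{j=0}^b\binom bj a_{\alpha,\beta}(j)\lambda_{n,j,\mathbf{s}},$$ where $a_{\alpha,0}(j)=1$ for all $\alpha\ge0$ and all $j$, and $$a_{\alpha,\beta}(j)=\frac{b-j}{b}a_{\alpha,\beta-1}(j)-\frac jb a_{\alpha,\beta-1}(j-1)\quad\text{for all }\alpha\ge0,\ \beta\ge1.$$
   Context: Lightbulb process on $n$ bulbs with $k$ stages and switch pattern $\mathbf{s}=(s_1,\dots,s_k)$: the initial (stage $0$) status $X_{0j}\in\{0,1\}$ of each bulb is given deterministically; at stage $r$ a uniformly random subset of exactly $s_r$ bulbs is toggled, independently across stages; $X_{rj}=1$ iff bulb $j$ is toggled at stage $r$, and $X_j=(\sum_{r=0}^kX_{rj})\bmod2$ is the indicator that bulb $j$ is on at the terminal time. Define $f_{\alpha,\beta,\mathbf{s}}=P(X_i=0,\ i=1,\dots,\alpha+\beta\mid X_{0i}=0,\ i=1,\dots,\alpha;\ X_{0i}=1,\ i=\alpha+1,\dots,\alpha+\beta)$. With $(n)_t=n(n-1)\cdots(n-t+1)$, $\lambda_{n,j,s}=\sum_{t=0}^j\binom jt(-2)^t\frac{(s)_t}{(n)_t}$ and $\lambda_{n,j,\mathbf{s}}=\prod_{r=1}^k\lambda_{n,j,s_r}$ (empty product $1$). In the recursion, values $a(-1)$ and $a(b)$ only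 appear multiplied by zero. *)

(* Defs.v *)
From mathcomp Require Import all_boot all_order all_algebra.
Set Implicit Arguments. Unset Strict Implicit. Unset Printing Implicit Defensive.
Import Order.TTheory GRing.Theory Num.Theory.
Local Open Scope ring_scope.

(* Sample space of the lightbulb process: a choice of the toggled subset
   T r of bulbs at each stage r < k = size s, with #|T r| = s_r.  The law
   is uniform on this finite set (uniform subsets, independent stages). *)
Definition switch_space (n : nat) (s : seq nat) :
  {set {ffun 'I_(size s) -> {set 'I_n}}} :=
  [set T : {ffun 'I_(size s) -> {set 'I_n}} | [forall r, #|T r| == nth 0%N s r]].

Definition bulb_on (n : nat) (s : seq nat) (X0 : 'I_n -> bool)
  (T : {ffun 'I_(size s) -> {set 'I_n}}) (j : 'I_n) : bool :=
  odd (X0 j + #|[set r | j \in T r]|).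

(* Probability that bulbs 0 .. b-1 (i.e. bulbs 1..b of the paper) are all
   off at the terminal time, given the deterministic initial status X0. *)
Definition f_prob (n : nat) (s : seq nat) (X0 : 'I_n -> bool) (b : nat) : rat :=
  (#|[set T in switch_space n s |
       [forall j : 'I_n, (j < b)%N ==> ~~ bulb_on X0 T j]]|)%:R
  / (#|switch_space n s|)%:R.

Fixpoint acoef (al be : nat) (j : nat) : rat :=
  match be with
  | 0%N => 1
  | be'.+1 =>
      let b := (al + be'.+1)%N in
      ((b - j)%N)%:R / b%:R * acoef al be' j
      - j%:R / b%:R * acoef al be' j.-1
  end.

Definition lam (n j s : nat) : rat :=
  \sum_(t < j.+1) ('C(j, t))%:R * (-2) ^+ t * (s ^_ t)%:R / (n ^_ t)%:R.

Definition lamS (n j : nat) (s : seq nat) : rat := \prod_(r <- s) lam n j r.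

(* Main.v *)
Require Import Defs.
From mathcomp Require Import all_boot all_order all_algebra.
Import Order.TTheory GRing.Theory Num.Theory.
From mathcomp Require Import ring lra zify.
Local Open Scope ring_scope.

Lemma subset_expand (I : finType) (R : comRingType) (w : I -> R) :
  \prod_i (1 + w i) = \sum_(t : {set I}) \prod_(i in t) w i.
Proof.
transitivity (\prod_i \sum_(x : bool) (if x then w i else 1)).
  by apply: eq_bigr => i _; rewrite big_bool /= addrC.
rewrite bigA_distr_bigA /=.
rewrite (reindex (fun t : {set I} => [ffun i => i \in t])) /=.
  apply: eq_bigr => t _; rewrite [RHS]big_mkcond; apply: eq_bigr => i _.
  by rewrite ffunE.
exists (fun f : {ffun I -> bool} => [set i | f i]) => [t _| f _].
  by apply/setP => i; rewrite inE ffunE.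
by apply/ffunP => i; rewrite ffunE inE.
Qed.

Lemma coef_pow1X (a j : nat) : ((1 + 'X : {poly rat}) ^+ a)`_j = ('C(a, j))%:R.
Proof.
elim: a j => [|a IH] j.
  by rewrite expr0 coefC; case: j.
rewrite exprSr mulrDr mulr1 coefD coefMX IH.
case: j => [|j] /=; first by rewrite addr0 !bin0.
by rewrite binS natrD IH.
Qed.

Lemma coef_main (al be j : nat) :
  ((1 + 'X : {poly rat}) ^+ al * (1 - 'X) ^+ be)`_j
  = ('C(al + be, j))%:R * acoef al be j.
Proof.
elim: be j => [|be IH] j.
  by rewrite expr0 mulr1 addn0 coef_pow1X /= mulr1.
rewrite exprSr mulrA mulrBr mulr1 coefB coefMX !IH /=.
set b := (al + be)%N.
have -> : (al + be.+1 = b.+1)%N by rewrite addnS.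
have hb : (b.+1)%:R != 0 :> rat by rewrite pnatr_eq0.
case: j => [|m] /=.
  rewrite subr0 !bin0 subn0 mul0r mul0r subr0 mul1r mulrA divff //.
  by rewrite mul1r.
have e1 : (b.+1 * 'C(b, m.+1) = (b.+1 - m.+1) * 'C(b.+1, m.+1))%N.
  by rewrite -mul_bin_down.
have e2 : (b.+1 * 'C(b, m) = m.+1 * 'C(b.+1, m.+1))%N.
  by rewrite -mul_bin_diag.
have e1' : ('C(b, m.+1))%:R = ((b.+1 - m.+1)%N)%:R * ('C(b.+1, m.+1))%:R / (b.+1)%:R :> rat.
  by rewrite -natrM -e1 natrM mulrC mulrA mulVf // mul1r.
have e2' : ('C(b, m))%:R = (m.+1)%:R * ('C(b.+1, m.+1))%:R / (b.+1)%:R :> rat.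
  by rewrite -natrM -e2 natrM mulrC mulrA mulVf // mul1r.
rewrite e1' e2'.
by field; rewrite nat1r.
Qed.


Lemma binff n m t : (t <= m)%N -> (m <= n)%N ->
  ('C(n,m) * m^_t = 'C(n-t,m-t) * n^_t)%N.
Proof.
move=> htm hmn.
have h1 := ffact_fact htm.
have h2 := bin_fact hmn.
have htn : (t <= n)%N by apply: leq_trans hmn.
have h4 := ffact_fact htn.
have hmtn : (m - t <= n - t)%N by apply: leq_sub2r.
have h3 := bin_fact hmtn.
have hsub : (n - t - (m - t) = n - m)%N by lia.
rewrite hsub in h3.
apply/eqP; rewrite -(eqn_pmul2r (fact_gt0 (m-t))) -(eqn_pmul2r (fact_gt0 (n-m))).
apply/eqP; transitivity (n`!).
  by rewrite -h2 -h1; ring.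
by rewrite -h4 -h3; ring.
Qed.

Lemma stage (n m : nat) (S : {set 'I_n}) : (m <= n)%N ->
  \sum_(t : {set 'I_n} | #|t| == m) \prod_(i in S) (if i \in t then -1 else 1 : rat)
  = ('C(n, m))%:R * lam n #|S| m.
Proof.
move=> hmn.
pose c (i : 'I_n) : rat := if i \in S then -1 else 1.
pose P : {poly rat} := \prod_(i : 'I_n) (1 + (c i)%:P * 'X).
have hP1 : P`_m = \sum_(t : {set 'I_n} | #|t| == m) \prod_(i in S) (if i \in t then -1 else 1 : rat).
  rewrite /P subset_expand coef_sum [RHS]big_mkcond /=; apply: eq_bigr => t _.
  rewrite big_split /= -rmorph_prod prodr_const coefCM coefXn.
  rewrite eq_sym; case: eqP => _; last by rewrite mulr0.
  rewrite mulr1 [LHS]big_mkcond [RHS]big_mkcond; apply: eq_bigr => i _ /=.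
  by rewrite /c; case: (i \in t); case: (i \in S).
set j := #|S|.
have hjn : (j <= n)%N by rewrite -[n]card_ord max_card.
have hP2 : P = (1 - 'X) ^+ j * (1 + 'X) ^+ (n - j).
  rewrite /P (bigID (mem S)) /=.
  rewrite (eq_bigr (fun _ => 1 - 'X)); last first.
    by move=> i hi; rewrite /c hi polyCN mulN1r.
  rewrite [X in _ * X](eq_bigr (fun _ => 1 + 'X)); last first.
    by move=> i /negbTE hi; rewrite /c hi mul1r.
  rewrite !prodr_const.
  congr (_ * _ ^+ _).
  have hc := cardsC S; rewrite card_ord in hc.
  have hc2 : #|~: S| = (n - j)%N by rewrite /j; lia.
  rewrite -hc2.
  by apply: eq_card => i; rewrite !inE.
rewrite -hP1 hP2.
have -> : (1 - 'X : {poly rat}) = (1 + 'X) + (-2)%:P * 'X.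
  by rewrite polyCN polyC_natr; ring.
rewrite exprDn mulr_suml coef_sum /lam mulr_sumr.
apply: eq_bigr => [[t ht]] _ /=.
have htj : (t <= j)%N by [].
have htn : (t <= n)%N by apply: leq_trans hjn.
have -> : ((1 + 'X) ^+ (j - t) * ((-2)%:P * 'X) ^+ t *+ 'C(j, t) * (1 + 'X) ^+ (n - j)
   : {poly rat}) = (((-2) ^+ t * ('C(j, t))%:R)%:P) * ('X ^+ t * (1 + 'X) ^+ (n - t)).
  have -> : (n - t = (j - t) + (n - j))%N by lia.
  rewrite exprD exprMn rmorphM rmorphXn /= -mulr_natr.
  rewrite (_ : (('C(j,t))%:R)%:P = ('C(j,t))%:R :> {poly rat}); last by rewrite polyC_natr.
  ring.
rewrite coefCM coefXnM.
case: ltnP => hmt.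
  by rewrite ffact_small // !(mulr0, mul0r).
rewrite coef_pow1X.
have hnt : (n ^_ t)%:R != 0 :> rat by rewrite pnatr_eq0 -lt0n ffact_gt0.
have e := @binff n m t hmt hmn.
have e' : ('C(n, m))%:R * (m ^_ t)%:R / (n ^_ t)%:R = ('C(n - t, m - t))%:R :> rat.
  by rewrite -natrM e natrM mulfK.
rewrite -e'; field; done.
Qed.


Lemma forall_prod (I : finType) (P : pred I) :
  (if [forall j, P j] then 1 else 0 : rat) = \prod_j (if P j then 1 else 0).
Proof.
case: ifP => [/forallP H | /negbT].
  by rewrite big1 // => j _; rewrite H.
rewrite negb_forall => /existsP [j Hj].
by rewrite (bigD1 j) //= (negbTE Hj) mul0r.
Qed.

Lemma indic (x : bool) (c : nat) :
  (if ~~ odd (x + c) then 1 else 0 : rat)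
  = (1 + (if x then -1 else 1) * (-1) ^+ c) / 2.
Proof.
rewrite -signr_odd oddD; case: x; case: (odd c) => /=; field; done.
Qed.

Lemma sign_card (I : finType) (A : {set I}) :
  (-1) ^+ #|A| = \prod_(r : I) (if r \in A then -1 else 1 : rat).
Proof. by rewrite -prodr_const big_mkcond. Qed.

Lemma sum_delta (N k : nat) (F : nat -> rat) : (k < N)%N ->
  \sum_(j < N) ((k == j)%:R * F j) = F k.
Proof.
move=> hk; rewrite (bigD1 (Ordinal hk)) //= eqxx mul1r big1 ?addr0 //.
move=> j hj; case: eqP => e; last by rewrite mul0r.
by move: hj; rewrite (_ : j = Ordinal hk) ?eqxx //; apply: val_inj.
Qed.

Lemma coef_subset (I : finType) (w : I -> rat) j :
  (\prod_i (1 + (w i)%:P * 'X))`_j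
  = \sum_(S : {set I}) (\prod_(i in S) w i) * (#|S| == j)%:R.
Proof.
rewrite subset_expand coef_sum; apply: eq_bigr => t _.
by rewrite big_split /= -rmorph_prod prodr_const coefCM coefXn eq_sym.
Qed.


Lemma polyC_lemma (n al be : nat) (X0 : 'I_n -> bool) :
  (al + be <= n)%N ->
  (forall i : 'I_n, (i < al)%N -> X0 i = false) ->
  (forall i : 'I_n, (al <= i < al + be)%N -> X0 i = true) ->
  \prod_(i : 'I_n) (1 + ((if (i < al + be)%N then (if X0 i then -1 else 1) else 0 : rat))%:P * 'X)
  = (1 + 'X) ^+ al * (1 - 'X) ^+ be.
Proof.
move=> hb h0 h1.
pose G (k : nat) : {poly rat} := if (k < al)%N then 1 + 'X else if (k < al + be)%N then 1 - 'X else 1.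
rewrite (eq_bigr (fun i : 'I_n => G i)); last first.
  move=> i _; rewrite /G.
  case: (ltnP i al) => hi.
    by rewrite h0 // (leq_trans hi (leq_addr _ _)) mul1r.
  case: ifP => hib; last by rewrite mul0r addr0.
  by rewrite h1 ?hi ?hib // polyCN mulN1r.
rewrite -(big_mkord xpredT G).
have e : \prod_(0 <= i < n) G i = (\prod_(0 <= i < al) G i * \prod_(al <= i < al+be) G i) * \prod_(al+be <= i < n) G i.
  by rewrite -big_cat_nat ?leq_addr // -big_cat_nat.
have e1 : \prod_(0 <= i < al) G i = (1 + 'X) ^+ al.
  rewrite -{2}(subn0 al) -prodr_const_nat; apply: eq_big_nat => k /andP [_ hk].
  by rewrite /G hk.
have e2 : \prod_(al <= i < al + be) G i = (1 - 'X) ^+ be.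
  rewrite -{2}(addKn al be) -prodr_const_nat; apply: eq_big_nat => k /andP [hk1 hk2].
  by rewrite /G ltnNge hk1 hk2.
have e3 : \prod_(al + be <= i < n) G i = 1.
  rewrite big_nat_cond big1 // => k /andP [/andP [hk1 hk2] _].
  by rewrite /G ltnNge (leq_trans (leq_addr be al) hk1) /= ltnNge hk1.
by rewrite e e1 e2 e3 mulr1.
Qed.

Lemma space_sum (n : nat) (s : seq nat) (S : {set 'I_n}) :
  all (fun sr => sr <= n)%N s ->
  \sum_(T in switch_space n s) \prod_(r : 'I_(size s))
      \prod_(i in S) (if i \in T r then -1 else 1 : rat)
  = (\prod_(x <- s) ('C(n, x))%:R) * lamS n #|S| s.
Proof.
move=> hall.
pose Q (r : 'I_(size s)) := [pred t : {set 'I_n} | #|t| == nth 0%N s r].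
transitivity (\prod_(r : 'I_(size s)) \sum_(t | Q r t)
      \prod_(i in S) (if i \in t then -1 else 1 : rat)).
  rewrite bigA_distr_big_dep; apply: eq_bigl => T.
  rewrite /switch_space in_set; apply/forallP/familyP => H r; exact: (H r).
rewrite (eq_bigr (fun r : 'I_(size s) => ('C(n, nth 0%N s r))%:R * lam n #|S| (nth 0%N s r))); last first.
  move=> r _; rewrite -stage //.
  by apply: (allP hall); apply: mem_nth.
have hseq : forall F : nat -> rat, \prod_(x <- s) F x = \prod_(i < size s) F (nth 0%N s i).
  by move=> F; rewrite (big_nth 0%N) big_mkord.
by rewrite big_split /lamS (hseq (fun x => ('C(n, x))%:R)) (hseq (fun x => lam n #|S| x)).
Qed.


Lemma perT (n : nat) (s : seq nat) (X0 : 'I_n -> bool) (b : nat)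
  (T : {ffun 'I_(size s) -> {set 'I_n}}) : (b <= n)%N ->
  (if [forall j : 'I_n, (j < b)%N ==> ~~ bulb_on X0 T j] then 1 else 0 : rat)
  = (1/2) ^+ b * \sum_(S : {set 'I_n})
      (\prod_(i in S) (if (i < b)%N then (if X0 i then -1 else 1) else 0 : rat)) *
      \prod_(r : 'I_(size s)) \prod_(i in S) (if i \in T r then -1 else 1 : rat).
Proof.
move=> hb.
pose e (i : 'I_n) := \prod_(r : 'I_(size s)) (if i \in T r then -1 else 1 : rat).
pose v (i : 'I_n) := (if (i < b)%N then (if X0 i then -1 else 1) else 0 : rat).
rewrite forall_prod.
transitivity (\prod_(i : 'I_n) ((if (i < b)%N then 1/2 else 1) * (1 + v i * e i))).
  apply: eq_bigr => i _; rewrite /v; case: (i < b)%N; last first.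
    by rewrite mul0r addr0 mulr1.
  rewrite /bulb_on indic sign_card.
  have -> : \prod_(r : 'I_(size s)) (if r \in [set r | i \in T r] then -1 else 1 : rat) = e i.
    by apply: eq_bigr => r _; rewrite inE.
  by rewrite mulrC.
rewrite big_split.
congr (_ * _).
  rewrite -(big_mkcond (fun i : 'I_n => (i < b)%N)).
  by rewrite -(big_ord_widen n (fun _ => 1/2)) // prodr_const card_ord.
rewrite subset_expand; apply: eq_bigr => S _.
rewrite big_split. congr (_ * _).
by rewrite /e exchange_big.
Qed.


Theorem lemma4p4 (n al be : nat) (s : seq nat) (X0 : 'I_n -> bool) :
  (al + be <= n)%N ->
  all (fun sr => sr <= n)%N s ->
  (forall i : 'I_n, (i < al)%N -> X0 i = false) ->
  (forall i : 'I_n, (al <= i < al + be)%N -> X0 i = true) ->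
  f_prob s X0 (al + be) =
  1 / 2 ^+ (al + be) *
  \sum_(j < (al + be).+1)
     ('C(al + be, j))%:R * acoef al be j * lamS n j s.
Proof.
move=> hb hall h0 h1.
pose v (i : 'I_n) := (if (i < al + be)%N then (if X0 i then -1 else 1) else 0 : rat).
pose Cp := \prod_(x <- s) ('C(n,x))%:R : rat.
have hCp : Cp != 0.
  rewrite /Cp prodf_seq_neq0; apply/allP => x hx.
  by rewrite pnatr_eq0 -lt0n bin_gt0; apply: (allP hall).
have hnum : (#|[set T in switch_space n s | [forall j : 'I_n, (j < al + be)%N ==> ~~ bulb_on X0 T j]]|)%:R
    = (1/2) ^+ (al + be) * \sum_(S : {set 'I_n}) (\prod_(i in S) v i) * (Cp * lamS n #|S| s).
  rewrite -sum1_card natr_sum.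
  transitivity (\sum_(T in switch_space n s)
     (if [forall j : 'I_n, (j < al + be)%N ==> ~~ bulb_on X0 T j] then 1 else 0 : rat)).
    rewrite [LHS]big_mkcond [RHS]big_mkcond; apply: eq_bigr => T _.
    rewrite in_set; case: (T \in switch_space n s); rewrite ?andTb ?andFb //.
  under eq_bigr => T _ do rewrite (@perT n s X0 (al + be) T hb).
  rewrite -mulr_sumr; congr (_ * _).
  rewrite exchange_big; apply: eq_bigr => S _.
  by rewrite -mulr_sumr space_sum.
have hden : (#|switch_space n s|)%:R = Cp.
  rewrite -sum1_card natr_sum.
  transitivity (\sum_(T in switch_space n s) \prod_(r : 'I_(size s))
      \prod_(i in (set0 : {set 'I_n})) (if i \in T r then -1 else 1 : rat)).
    apply: eq_bigr => T _; rewrite big1 // => r _; by rewrite big_set0.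
  have hL : lamS n 0 s = 1.
    rewrite /lamS big1 // => x _.
    by rewrite /lam big_ord1 bin0 expr0 !ffactn0 !mul1r invr1.
  by rewrite space_sum // cards0 hL mulr1.
rewrite /f_prob hnum hden.
have hmain : \sum_(S : {set 'I_n}) (\prod_(i in S) v i) * lamS n #|S| s
   = \sum_(j < (al + be).+1) ('C(al + be, j))%:R * acoef al be j * lamS n j s.
  transitivity (\sum_(j < n.+1) (\sum_(S : {set 'I_n}) (\prod_(i in S) v i) * (#|S| == j)%:R) * lamS n j s).
    under [RHS]eq_bigr do rewrite mulr_suml.
    rewrite [RHS]exchange_big; apply: eq_bigr => S _.
    have hS : (#|S| < n.+1)%N by rewrite ltnS -[X in (_ <= X)%N]card_ord max_card.
    rewrite -(@sum_delta n.+1 #|S| (fun j => lamS n j s) hS) mulr_sumr.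
    by apply: eq_bigr => j _; rewrite mulrA.
  rewrite (eq_bigr (fun j : 'I_n.+1 => ('C(al + be, j))%:R * acoef al be j * lamS n j s)); last first.
    by move=> j _; rewrite -coef_subset polyC_lemma // coef_main.
  rewrite -(big_mkord xpredT (fun j => ('C(al + be, j))%:R * acoef al be j * lamS n j s)).
  rewrite -(big_mkord xpredT (fun j => ('C(al + be, j))%:R * acoef al be j * lamS n j s)).
  set F := (fun j : nat => ('C(al + be, j))%:R * acoef al be j * lamS n j s).
  have hsplit : \sum_(0 <= i < n.+1) F i = \sum_(0 <= i < (al+be).+1) F i + \sum_((al+be).+1 <= i < n.+1) F i.
    by rewrite -big_cat_nat.
  have hz : \sum_((al+be).+1 <= i < n.+1) F i = 0.
    rewrite big_nat_cond big1 // => j /andP [/andP [hj _] _].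
    by rewrite /F bin_small // mul0r mul0r.
  by rewrite hsplit hz addr0.
rewrite -hmain.
have -> : \sum_(S : {set 'I_n}) (\prod_(i in S) v i) * (Cp * lamS n #|S| s)
    = Cp * \sum_(S : {set 'I_n}) (\prod_(i in S) v i) * lamS n #|S| s.
  by rewrite mulr_sumr; apply: eq_bigr => S _; rewrite mulrCA.
by rewrite -mulrA (mulrC Cp) mulfK // expr_div_n expr1n.
Qed.
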